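(* Let $\Omega\subset\mathbb R^2$ be a smooth, bounded domain, $d_i,\chi,\lambda_i,\mu_i,a_i,b_i>0$ ($i\in\{1,2,3\}$), $0\le u_0,v_0\in\bigcup_{\theta>2}W^{1,\theta}(\Omega)$, $0\le w_0\in C^0(\overline\Omega)$, and let $(u,v,w)$ be the nonnegative, unique maximal classical solution on $\overline\Omega\times[0,T_{\max})$, $T_{\max}\in(0,\infty]$, of $$\begin{cases} u_t = d_1 \Delta u + u(\lambda_1 - \mu_1 u - a_1 v - a_2 w),\\ v_t = d_2 \Delta v + v(\lambda_2 - \mu_2 v + b_1 u - a_3 w),\\ w_t = d_3 \Delta w - \chi \nabla\cdot(w \nabla(uv)) + w(\lambda_3 - \mu_3 w + b_2 u + b_3 v) & \text{in } \Omega\times(0,T_{\max}),\\ \partial_\nu u = \partial_\nu v = \partial_\nu w = 0 & \text{on } \partial\Omega\times(0,T_{\max}),\\ u(\cdot,0)=u_0,\ v(\cdot,0)=v_0,\ w(\cdot,0)=w_0. \end{cases}$$ Then there is $C>0$ such that $\|u\|_{L^\infty(\Omega\times(0,T_{\max}))}\le C$ and $\|v\|_{L^\infty(\Omega\times(0,T_{\max}))}\le C$.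
   Context: The maximal classical solution belongs to $(C^{2,1}(\overline\Omega\times[0,T_{\max})))^3\cap C^0([0,T_{\max});W^{1,\theta}(\Omega)\times W^{1,\theta}(\Omega)\times C^0(\overline\Omega))$ for some $\theta>2$; its existence and uniqueness is established in the paper. $\nu$ is the outward unit normal. *)

(* Defs.v *)
From mathcomp Require Import all_boot all_order all_algebra.
From mathcomp Require Import all_classical all_reals all_analysis.
Import Order.TTheory GRing.Theory Num.Theory numFieldNormedType.Exports.

Set Implicit Arguments.
Unset Strict Implicit.
Unset Printing Implicit Defensive.

Local Open Scope classical_set_scope.
Local Open Scope ring_scope.

Section PDEDefs.
Variable R : realType.

Definition dx (g : R -> R -> R) : R -> R -> R :=
  fun x y => derive1 (fun s => g s y) x.
Definition dy (g : R -> R -> R) : R -> R -> R :=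
  fun x y => derive1 (fun s => g x s) y.

Definition iter_d (s : seq bool) (g : R -> R -> R) : R -> R -> R :=
  foldr (fun b h => if b then dx h else dy h) g s.

Definition smooth2 (g : R -> R -> R) : Prop :=
  forall s : seq bool,
    (forall x y, derivable (fun r => iter_d s g r y) x 1 /\
                 derivable (fun r => iter_d s g x r) y 1) /\
    continuous (fun p : R * R => iter_d s g p.1 p.2).

(* rho is a smooth global defining function of Omega:
   Omega = {rho < 0} and grad rho <> 0 on {rho = 0} = boundary of Omega.
   The outward unit normal at a boundary point is grad rho / |grad rho|. *)
Definition defining_function (Omega : set (R * R)) (rho : R -> R -> R) : Prop :=
  smooth2 rho /\
  (forall p : R * R, Omega p <-> rho p.1 p.2 < 0) /\
  (forall p : R * R, rho p.1 p.2 = 0 ->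
     dx rho p.1 p.2 != 0 \/ dy rho p.1 p.2 != 0).

Definition smooth_bounded_domain (Omega : set (R * R)) : Prop :=
  Omega !=set0 /\ open Omega /\ connected Omega /\ bounded_set Omega /\
  exists rho, defining_function Omega rho.

Definition leb2 := ((@lebesgue_measure R) \x (@lebesgue_measure R))%E.

Definition uncurry2 (g : R -> R -> R) : R * R -> R := fun p => g p.1 p.2.

Definition Lp_fin (Omega : set (R * R)) (theta : R) (g : R -> R -> R) : Prop :=
  measurable_fun Omega (uncurry2 g) /\
  (\int[leb2]_(p in Omega) ((`|g p.1 p.2| `^ theta)%:E) < +oo)%E.

Definition test_fun (Omega : set (R * R)) (phi : R -> R -> R) : Prop :=
  smooth2 phi /\
  exists K : set (R * R), compact K /\ K `<=` Omega /\
    (forall p, ~ K p -> phi p.1 p.2 = 0).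

Definition weak_grad (Omega : set (R * R)) (f g1 g2 : R -> R -> R) : Prop :=
  forall phi, test_fun Omega phi ->
    (\int[leb2]_(p in Omega) ((f p.1 p.2 * dx phi p.1 p.2)%:E) =
       - \int[leb2]_(p in Omega) ((g1 p.1 p.2 * phi p.1 p.2)%:E))%E /\
    (\int[leb2]_(p in Omega) ((f p.1 p.2 * dy phi p.1 p.2)%:E) =
       - \int[leb2]_(p in Omega) ((g2 p.1 p.2 * phi p.1 p.2)%:E))%E.

Definition W1_with_grad (Omega : set (R * R)) (theta : R)
    (f g1 g2 : R -> R -> R) : Prop :=
  Lp_fin Omega theta f /\ Lp_fin Omega theta g1 /\ Lp_fin Omega theta g2 /\
  weak_grad Omega f g1 g2.

Definition W1 (Omega : set (R * R)) (theta : R) (f : R -> R -> R) : Prop :=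
  exists g1 g2, W1_with_grad Omega theta f g1 g2.

Definition slice (f : R -> R -> R -> R) (t : R) : R -> R -> R :=
  fun x y => f x y t.

Definition uncurry3 (f : R -> R -> R -> R) : R * R * R -> R :=
  fun q => f q.1.1 q.1.2 q.2.

Definition Qint (Omega : set (R * R)) (T : \bar R) : set (R * R * R) :=
  [set q | Omega q.1 /\ 0 < q.2 /\ (q.2%:E < T)%E].
Definition Qcl (Omega : set (R * R)) (T : \bar R) : set (R * R * R) :=
  [set q | closure Omega q.1 /\ 0 < q.2 /\ (q.2%:E < T)%E].
Definition Qcl0 (Omega : set (R * R)) (T : \bar R) : set (R * R * R) :=
  [set q | closure Omega q.1 /\ 0 <= q.2 /\ (q.2%:E < T)%E].

Definition px (f : R -> R -> R -> R) : R -> R -> R -> R :=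
  fun x y t => derive1 (fun s => f s y t) x.
Definition py (f : R -> R -> R -> R) : R -> R -> R -> R :=
  fun x y t => derive1 (fun s => f x s t) y.
Definition pt (f : R -> R -> R -> R) : R -> R -> R -> R :=
  fun x y t => derive1 (fun s => f x y s) t.

Definition lap (f : R -> R -> R -> R) : R -> R -> R -> R :=
  fun x y t => px (px f) x y t + py (py f) x y t.

Definition cont_ext (Omega : set (R * R)) (T : \bar R)
    (g G : R -> R -> R -> R) : Prop :=
  {within Qcl Omega T, continuous (uncurry3 G)} /\
  (forall q, Qint Omega T q -> uncurry3 G q = uncurry3 g q).

Definition has_cont_ext (Omega : set (R * R)) (T : \bar R)
    (g : R -> R -> R -> R) : Prop :=
  exists G, cont_ext Omega T g G.

Definition C21 (Omega : set (R * R)) (T : \bar R) (f : R -> R -> R -> R) : Prop :=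
  (forall x y t, Qint Omega T ((x, y), t) ->
     derivable (fun s => f s y t) x 1 /\ derivable (fun s => f x s t) y 1 /\
     derivable (fun s => f x y s) t 1 /\
     derivable (fun s => px f s y t) x 1 /\ derivable (fun s => px f x s t) y 1 /\
     derivable (fun s => py f s y t) x 1 /\ derivable (fun s => py f x s t) y 1) /\
  has_cont_ext Omega T f /\
  has_cont_ext Omega T (px f) /\ has_cont_ext Omega T (py f) /\
  has_cont_ext Omega T (pt f) /\
  has_cont_ext Omega T (px (px f)) /\ has_cont_ext Omega T (py (px f)) /\
  has_cont_ext Omega T (px (py f)) /\ has_cont_ext Omega T (py (py f)).

(* homogeneous Neumann condition d_nu f = 0 on boundary(Omega) x (0,T), the
   normal derivative being computed from the continuous extension of grad f;
   nu is parallel to grad rho for any defining function rho *)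
Definition neumann (Omega : set (R * R)) (T : \bar R) (f : R -> R -> R -> R) : Prop :=
  forall rho G1 G2, defining_function Omega rho ->
    cont_ext Omega T (px f) G1 -> cont_ext Omega T (py f) G2 ->
    forall x y t, rho x y = 0 -> 0 < t -> (t%:E < T)%E ->
      G1 x y t * dx rho x y + G2 x y t * dy rho x y = 0.

Definition C0W1 (Omega : set (R * R)) (T : \bar R) (theta : R)
    (f : R -> R -> R -> R) : Prop :=
  exists G1 G2 : R -> R -> R -> R,
    (forall t, 0 <= t -> (t%:E < T)%E ->
       W1_with_grad Omega theta (slice f t) (slice G1 t) (slice G2 t)) /\
    (forall t0, 0 <= t0 -> (t0%:E < T)%E ->
       (fun t => \int[leb2]_(p in Omega)
           ((`|f p.1 p.2 t - f p.1 p.2 t0| `^ theta +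
             `|G1 p.1 p.2 t - G1 p.1 p.2 t0| `^ theta +
             `|G2 p.1 p.2 t - G2 p.1 p.2 t0| `^ theta)%:E))%E
         @ within [set t | 0 <= t /\ (t%:E < T)%E] (nbhs t0) --> 0%E).

Definition is_classical_solution (Omega : set (R * R))
    (d1 d2 d3 chi l1 l2 l3 m1 m2 m3 a1 a2 a3 b1 b2 b3 : R)
    (u0 v0 w0 : R -> R -> R) (T : \bar R) (u v w : R -> R -> R -> R) : Prop :=
  C21 Omega T u /\ C21 Omega T v /\ C21 Omega T w /\
  {within Qcl0 Omega T, continuous (uncurry3 u)} /\
  {within Qcl0 Omega T, continuous (uncurry3 v)} /\
  {within Qcl0 Omega T, continuous (uncurry3 w)} /\
  (exists theta, 2 < theta /\ C0W1 Omega T theta u /\ C0W1 Omega T theta v) /\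
  (forall x y t, Qint Omega T ((x, y), t) ->
     pt u x y t = d1 * lap u x y t +
       u x y t * (l1 - m1 * u x y t - a1 * v x y t - a2 * w x y t) /\
     pt v x y t = d2 * lap v x y t +
       v x y t * (l2 - m2 * v x y t + b1 * u x y t - a3 * w x y t) /\
     pt w x y t = d3 * lap w x y t
       - chi * (px (fun x' y' t' => w x' y' t' * px (fun a b c => u a b c * v a b c) x' y' t') x y t
                + py (fun x' y' t' => w x' y' t' * py (fun a b c => u a b c * v a b c) x' y' t') x y t)
       + w x y t * (l3 - m3 * w x y t + b2 * u x y t + b3 * v x y t)) /\
  neumann Omega T u /\ neumann Omega T v /\ neumann Omega T w /\
  (forall p : R * R, closure Omega p ->
     u p.1 p.2 0 = u0 p.1 p.2 /\ v p.1 p.2 0 = v0 p.1 p.2 /\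
     w p.1 p.2 0 = w0 p.1 p.2).

Definition is_maximal_solution (Omega : set (R * R))
    (d1 d2 d3 chi l1 l2 l3 m1 m2 m3 a1 a2 a3 b1 b2 b3 : R)
    (u0 v0 w0 : R -> R -> R) (T : \bar R) (u v w : R -> R -> R -> R) : Prop :=
  is_classical_solution Omega d1 d2 d3 chi l1 l2 l3 m1 m2 m3 a1 a2 a3 b1 b2 b3
    u0 v0 w0 T u v w /\
  ~ (exists (T' : \bar R) (u' v' w' : R -> R -> R -> R), (T < T')%E /\
       is_classical_solution Omega d1 d2 d3 chi l1 l2 l3 m1 m2 m3 a1 a2 a3 b1 b2 b3
         u0 v0 w0 T' u' v' w' /\
       (forall q, Qcl0 Omega T q ->
          uncurry3 u' q = uncurry3 u q /\ uncurry3 v' q = uncurry3 v q /\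
          uncurry3 w' q = uncurry3 w q)).

End PDEDefs.

(* Main.v *)
Require Import Defs.
From mathcomp Require Import all_boot all_order all_algebra.
From mathcomp Require Import all_classical all_reals all_analysis.
Import Order.TTheory GRing.Theory Num.Theory numFieldNormedType.Exports.
Local Open Scope classical_set_scope.
Local Open Scope ring_scope.
From mathcomp Require Import ring lra.
Set Implicit Arguments.
Unset Strict Implicit.

Section S.
Variable R : realType.
Lemma der_quot (f : R -> R) (a D : R) : is_derive a 1 f D ->
 forall e : R, 0 < e -> exists2 eta : R, 0 < eta & forall h : R, h != 0 ->
   `|h| < eta -> `|h^-1 * (f (h + a) - f a) - D| < e.
Proof.
case=> Hd HD e e0.
have Hc : (fun h : R => h^-1 *: ((f \o shift a) (h *: 1) - f a)) @ 0^' --> D.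
  by rewrite -HD; exact: Hd.
move/cvgrPdist_lt: Hc => /(_ e e0).
rewrite near_withinE => /nbhs_ballP [d d0 Hd'].
exists d => // h h0 hd.
have := Hd' h; rewrite -ball_normE /= sub0r normrN => /(_ hd h0).
by rewrite distrC /= /GRing.scale /= mulr1.
Qed.

Lemma left_max_deriv (f : R -> R) (t D d : R) : is_derive t 1 f D -> 0 < d ->
  (forall s, t - d < s -> s < t -> f s <= f t) -> 0 <= D.
Proof.
move=> Hd d0 Hm; rewrite leNgt; apply/negP => D0.
have nD : 0 < - D by rewrite oppr_gt0.
have [eta eta0 He] := der_quot Hd nD.
set h := - (Num.min eta d / 2).
have m0 : 0 < Num.min eta d by rewrite lt_min eta0 d0.
have me : Num.min eta d <= eta by rewrite ge_min lexx.
have md : Num.min eta d <= d by rewrite ge_min lexx orbT.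
have h0 : h < 0 by rewrite /h oppr_lt0 divr_gt0.
have := He h (ltr0_neq0 h0).
have -> : `|h| = Num.min eta d / 2 by rewrite ltr0_norm // /h opprK.
move=> /(_ ltac:(lra)).
have hi : h^-1 < 0 by rewrite invr_lt0.
have := Hm (h + t) ltac:(rewrite /h; lra) ltac:(lra).
set X := f (h + t) - f t.
move=> fle Hn.
have := ler_norm (h^-1 * X - D).
have : X <= 0 by rewrite /X; lra.
move=> X0 Hn2.
have : 0 <= h^-1 * X by rewrite mulr_le0 // ltW.
lra.
Qed.

Lemma int_max_second (f D : R -> R) (a D2 d : R) : 0 < d ->
  (forall r, `|r - a| < d -> is_derive r 1 f (D r)) ->
  is_derive a 1 D D2 ->
  (forall r, `|r - a| < d -> f r <= f a) -> D2 <= 0.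
Proof.
move=> d0 Hf HD Hm.
have Da : D a = 0.
  have H0 : is_derive a 1 f 0.
    apply: (@derive1_at_max _ f (a - d) (a + d) a); first lra.
    - move=> t; rewrite in_itv /= => /andP [t1 t2].
      have : `|t - a| < d by rewrite ltr_norml; apply/andP; split; lra.
      by move/Hf => [].
    - rewrite in_itv /=; apply/andP; split; lra.
    - move=> t; rewrite in_itv /= => /andP [t1 t2]; apply: Hm.
      by rewrite ltr_norml; apply/andP; split; lra.
  have := Hf a; rewrite subrr normr0 => /(_ d0) H1.
  by rewrite -(@derive_val _ _ _ _ _ _ _ H1) (@derive_val _ _ _ _ _ _ _ H0).
rewrite leNgt; apply/negP => D20.
have [eta eta0 He] := der_quot HD D20.
have m0 : 0 < Num.min eta d by rewrite lt_min eta0 d0.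
have me : Num.min eta d <= eta by rewrite ge_min lexx.
have md : Num.min eta d <= d by rewrite ge_min lexx orbT.
set m := Num.min eta d / 2.
have mpos : 0 < m by rewrite /m divr_gt0.
have mlt : m < d by rewrite /m; lra.
have mle : m < eta by rewrite /m; lra.
have Hf' : forall x, x \in `]a, a + m[ -> is_derive x 1 f (D x).
  move=> x; rewrite in_itv /= => /andP [x1 x2]; apply: Hf.
  by rewrite ltr_norml; apply/andP; split; lra.
have Hcont : {within `[a, a + m], continuous f}.
  apply: derivable_within_continuous => x; rewrite in_itv /= => /andP [x1 x2].
  have : `|x - a| < d by rewrite ltr_norml; apply/andP; split; lra.
  by move/Hf => [].
have [c] := @MVT _ f D a (a + m) ltac:(lra) Hf' Hcont.
rewrite in_itv /= => /andP [c1 c2] Heq.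
have hc : c - a != 0 by apply/eqP; lra.
have := He (c - a) hc.
rewrite gtr0_norm; last lra.
move=> /(_ ltac:(lra)).
rewrite Da subr0 subrK => Hn.
move: Hn; rewrite ltr_norml => /andP [Hn1 Hn2].
have Hp : 0 < (c - a)^-1 * D c by lra.
have Dc : 0 < D c.
  by move: Hp; rewrite pmulr_rgt0 // invr_gt0; lra.
have am : `|a + m - a| < d by rewrite addrC addKr gtr0_norm //; lra.
have := Hm (a + m) am.
have : 0 < D c * (a + m - a) by rewrite mulr_gt0 //; lra.
lra.
Qed.

Lemma bdry_core (psi phi Dpsi : R -> R) (a Dphi : R) (C : set R) :
  phi a = 0 -> is_derive a 1 phi Dphi -> Dphi != 0 -> C a ->
  (forall r, phi r < 0 -> C r) ->
  (forall r, phi r < 0 -> is_derive r 1 psi (Dpsi r)) ->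
  {within C, continuous psi} ->
  (exists2 eta : R, 0 < eta & forall r, `|r - a| < eta -> C r -> Dpsi r * Dphi < 0) ->
  exists r, C r /\ psi a < psi r.
Proof.
move=> pa Hphi Dn0 Ca HC Hpsi Hcont [eta eta0 Heta].
have nD : 0 < `|Dphi| by rewrite normr_gt0.
have [eta' eta'0 He] := der_quot Hphi nD.
have m0 : 0 < Num.min eta eta' by rewrite lt_min eta0 eta'0.
have me : Num.min eta eta' <= eta by rewrite ge_min lexx.
have md : Num.min eta eta' <= eta' by rewrite ge_min lexx orbT.
set m := Num.min eta eta' / 2.
have mpos : 0 < m by rewrite /m divr_gt0.
have mlt : m < eta by rewrite /m; lra.
have mle : m < eta' by rewrite /m; lra.
case: (ltgtP Dphi 0) => [Dneg|Dpos|D0]; last by rewrite D0 eqxx in Dn0.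
-
  have Hneg : forall r, a < r -> r <= a + m -> phi r < 0.
    move=> r r1 r2.
    have h0 : r - a != 0 by apply/eqP; lra.
    have := He (r - a) h0; rewrite gtr0_norm; last lra.
    move=> /(_ ltac:(lra)); rewrite subrK pa subr0 [`|Dphi|]ltr0_norm // ltr_norml.
    move=> /andP [H1 H2].
    have Hq : (r - a)^-1 * phi r < 0 by lra.
    by move: Hq; rewrite pmulr_rlt0 // invr_gt0; lra.
  have sub : `[a, a + m] `<=` C.
    move=> r; rewrite /= in_itv /= => /andP [r1 r2].
    case: (eqVneq r a) => [->//|rna].
    by apply: HC; apply: Hneg => //; rewrite lt_neqAle eq_sym rna r1.
  have Hd' : forall x, x \in `]a, a + m[ -> is_derive x 1 psi (Dpsi x).
    move=> x; rewrite in_itv /= => /andP [x1 x2]; apply: Hpsi; apply: Hneg; lra.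
  have [c] := @MVT _ psi Dpsi a (a + m) ltac:(lra) Hd' (continuous_subspaceW sub Hcont).
  rewrite in_itv /= => /andP [c1 c2] Heq.
  exists (a + m); split; first by apply: sub; rewrite /= in_itv /=; apply/andP; split; lra.
  have Cc : C c by apply: HC; apply: Hneg; lra.
  have := Heta c; rewrite gtr0_norm; last lra.
  move=> /(_ ltac:(lra) Cc) Hs.
  have Dc : 0 < Dpsi c.
    by move: Hs; rewrite nmulr_llt0.
  have : 0 < Dpsi c * (a + m - a) by rewrite mulr_gt0 //; lra.
  move: Heq; set P := Dpsi c * _; lra.
-
  have Hneg : forall r, a - m <= r -> r < a -> phi r < 0.
    move=> r r1 r2.
    have h0 : r - a != 0 by apply/eqP; lra.
    have := He (r - a) h0; rewrite ltr0_norm; last lra.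
    move=> /(_ ltac:(lra)); rewrite subrK pa subr0 [`|Dphi|]gtr0_norm // ltr_norml.
    move=> /andP [H1 H2].
    have Hq : 0 < (r - a)^-1 * phi r by lra.
    have ri : (r - a)^-1 < 0 by rewrite invr_lt0; lra.
    by move: Hq; rewrite nmulr_rgt0.
  have sub : `[a - m, a] `<=` C.
    move=> r; rewrite /= in_itv /= => /andP [r1 r2].
    case: (eqVneq r a) => [->//|rna].
    by apply: HC; apply: Hneg => //; rewrite lt_neqAle rna r2.
  have Hd' : forall x, x \in `]a - m, a[ -> is_derive x 1 psi (Dpsi x).
    move=> x; rewrite in_itv /= => /andP [x1 x2]; apply: Hpsi; apply: Hneg; lra.
  have [c] := @MVT _ psi Dpsi (a - m) a ltac:(lra) Hd' (continuous_subspaceW sub Hcont).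
  rewrite in_itv /= => /andP [c1 c2] Heq.
  exists (a - m); split; first by apply: sub; rewrite /= in_itv /=; apply/andP; split; lra.
  have Cc : C c by apply: HC; apply: Hneg; lra.
  have := Heta c; rewrite ltr0_norm; last lra.
  move=> /(_ ltac:(lra) Cc) Hs.
  have Dc : Dpsi c < 0.
    by move: Hs; rewrite pmulr_llt0.
  have : Dpsi c * (a - (a - m)) < 0 by rewrite pmulr_llt0 //; lra.
  move: Heq; set P := Dpsi c * _; lra.
Qed.
Lemma nbhs_subE (T : topologicalType) (A : set T) (x : T) : A x ->
  @nbhs _ (subspace A) x = within A (nbhs x).
Proof. by move=> Ax; case: (nbhs_subspaceP A x). Qed.

Lemma withinP (V : normedModType R) (A : set V) (g : V -> R) :
  {within A, continuous g} <->
  (forall x, A x -> forall e : R, 0 < e -> exists2 d : R, 0 < d &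
     forall y, A y -> `|x - y| < d -> `|g x - g y| < e).
Proof.
rewrite continuous_subspace_in; split.
- move=> H x Ax e e0.
  have := H x; rewrite inE => /(_ Ax).
  rewrite /continuous_at nbhs_subE //.
  move=> /cvgrPdist_lt /(_ e e0).
  rewrite near_withinE => /nbhs_ballP [d d0 Hd].
  exists d => // y Ay xy; apply: (Hd y) => //; by rewrite -ball_normE.
- move=> H x; rewrite inE => Ax.
  rewrite /continuous_at nbhs_subE //.
  apply/(@cvgrPdist_lt _ _ _ (within A (nbhs x)) (within_filter _ _)) => e e0.
  rewrite near_withinE; apply/nbhs_ballP.
  have [d d0 Hd] := H x Ax e e0.
  exists d => // y /= xy Ay; apply: Hd => //; by rewrite -ball_normE in xy.
Qed.
Lemma within_comp (V W : normedModType R) (A : set V) (B : set W) (g : W -> R)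
  (phi : V -> W) : continuous phi -> (forall x, A x -> B (phi x)) ->
  {within B, continuous g} -> {within A, continuous (g \o phi)}.
Proof.
move=> Hphi AB /withinP Hg; apply/withinP => x Ax e e0.
have [d d0 Hd] := Hg (phi x) (AB x Ax) e e0.
have := Hphi x; move/cvgrPdist_lt => /(_ d d0) /nbhs_ballP [d' d'0 Hd'].
exists d' => // y Ay xy; apply: Hd; first exact: AB.
by apply: Hd'; rewrite -ball_normE.
Qed.

Lemma line_x_cont (b t : R) : continuous (fun r : R => ((r, b), t)).
Proof.
move=> r.
apply: (@cvg_pair _ _ _ (nbhs r) (nbhs (r,b)) (nbhs t)); last exact: cvg_cst.
apply: (@cvg_pair _ _ _ (nbhs r) (nbhs r) (nbhs b)); [exact: cvg_id|exact: cvg_cst].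
Qed.

Lemma line_y_cont (a t : R) : continuous (fun r : R => ((a, r), t)).
Proof.
move=> r.
apply: (@cvg_pair _ _ _ (nbhs r) (nbhs (a,r)) (nbhs t)); last exact: cvg_cst.
apply: (@cvg_pair _ _ _ (nbhs r) (nbhs a) (nbhs r)); [exact: cvg_cst|exact: cvg_id].
Qed.

Lemma line_t_cont (a b : R) : continuous (fun r : R => ((a, b), r)).
Proof.
move=> r.
apply: (@cvg_pair _ _ _ (nbhs r) (nbhs (a,b)) (nbhs r)); [exact: cvg_cst|exact: cvg_id].
Qed.

Lemma pt_x_cont (b : R) : continuous (fun r : R => (r, b)).
Proof.
move=> r.
apply: (@cvg_pair _ _ _ (nbhs r) (nbhs r) (nbhs b)); [exact: cvg_id|exact: cvg_cst].
Qed.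

Lemma pt_y_cont (a : R) : continuous (fun r : R => (a, r)).
Proof.
move=> r.
apply: (@cvg_pair _ _ _ (nbhs r) (nbhs a) (nbhs r)); [exact: cvg_cst|exact: cvg_id].
Qed.

Lemma cont_bound (T : topologicalType) (A : set T) (g : T -> R) :
  A !=set0 -> compact A -> {within A, continuous g} ->
  exists B : R, 0 <= B /\ forall p, A p -> `|g p| <= B.
Proof.
move=> A0 cA cg.
have cn : {within A, continuous (Num.norm \o g)}.
  apply: within_continuous_comp => //; move=> y _; exact: norm_continuous.
have [c Ac Hc] := compact_EVT_max A0 cA cn.
exists `|g c|; split => // p Ap.
by have := Hc p; rewrite !inE => /(_ Ap).
Qed.
End S.

Section S2.
Variable R : realType.

Lemma closure_compact (Omega : set (R * R)) : bounded_set Omega -> compact (closure Omega).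
Proof.
case=> M [_ HM].
have HB := HM (M + 1) ltac:(lra).
set B := M + 1 in HB.
set box := [set` `[-B, B]] `*` [set` `[-B, B]] : set (R * R).
have cbox : compact box by apply: compact_setX; exact: segment_compact.
have clbox : closed box by apply: compact_closed => //; exact: norm_hausdorff.
suff sub : closure Omega `<=` box.
  have := @subclosed_compact _ (closure Omega) box (@closed_closure _ Omega) cbox sub. by [].
rewrite closureE; apply: smallest_sub => // p Op.
have := HB p Op; rewrite /= => Hp.
have H1 : `|p.1| <= B by apply: le_trans Hp; rewrite le_max lexx.
have H2 : `|p.2| <= B by apply: le_trans Hp; rewrite le_max lexx orbT.
by split; rewrite /= in_itv /= -ler_norml.
Qed.


Lemma rho_cont (rho : R -> R -> R) : smooth2 rho ->
  continuous (fun p : R * R => rho p.1 p.2).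
Proof. by move=> Hs; exact: (Hs [::]).2. Qed.

Lemma rho_closure (Omega : set (R * R)) rho : defining_function Omega rho ->
  forall p, closure Omega p -> rho p.1 p.2 <= 0.
Proof.
move=> [Hs [HO _]].
have Hc := rho_cont Hs.
have cl := (continuous_closedP _).1 Hc _ (@closed_le _ 0).
have sub : closure Omega `<=` (fun p : R * R => rho p.1 p.2) @^-1` [set x | x <= 0].
  rewrite closureE; apply: smallest_sub => // p Op.
  by rewrite /= ltW //; apply/HO.
by move=> p /sub.
Qed.

Lemma rho_bdry (Omega : set (R * R)) rho : defining_function Omega rho ->
  forall p, closure Omega p -> ~ Omega p -> rho p.1 p.2 = 0.
Proof.
move=> Hd p cp nO.
have := rho_closure Hd cp; rewrite le_eqVlt => /orP [/eqP //|lt0].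
by exfalso; apply: nO; apply/Hd.2.1.
Qed.

Lemma open_x (Omega : set (R * R)) (a b : R) : open Omega -> Omega (a, b) ->
  exists2 eta : R, 0 < eta & forall r, `|r - a| < eta -> Omega (r, b).
Proof.
move=> oO Oab.
have nO : nbhs (a, b) Omega by apply: open_nbhs_nbhs; split.
have := (@pt_x_cont R b a) _ nO => /nbhs_ballP [e e0 He].
exists e => // r ra; apply: (He r).
by rewrite -ball_normE /= distrC.
Qed.

Lemma open_y (Omega : set (R * R)) (a b : R) : open Omega -> Omega (a, b) ->
  exists2 eta : R, 0 < eta & forall r, `|r - b| < eta -> Omega (a, r).
Proof.
move=> oO Oab.
have nO : nbhs (a, b) Omega by apply: open_nbhs_nbhs; split.
have := (@pt_y_cont R a b) _ nO => /nbhs_ballP [e e0 He].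
exists e => // r ra; apply: (He r).
by rewrite -ball_normE /= distrC.
Qed.


Lemma deriv_of (g : R -> R) (x : R) : derivable g x 1 -> is_derive x 1 g (derive1 g x).
Proof. by move=> H; rewrite derive1E; exact: derivableP. Qed.

Lemma der_lin (f g : R -> R) (e x a b : R) : is_derive x 1 f a -> is_derive x 1 g b ->
  is_derive x 1 (fun r => f r - e * g r) (a - e * b).
Proof. move=> Ha Hb. exact: (is_deriveB Ha (is_deriveZ e Hb)). Qed.

Lemma int_x (Omega : set (R * R)) rho f (T : \bar R) (eps a b ts : R) :
  smooth2 rho -> C21 Omega T f -> open Omega -> Omega (a, b) -> 0 < ts ->
  (ts%:E < T)%E ->
  (forall r, Omega (r, b) -> f r b ts - eps * rho r b <= f a b ts - eps * rho a b) ->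
  px (px f) a b ts - eps * dx (dx rho) a b <= 0.
Proof.
move=> Hs [Hf _] oO Oab ts0 tsT Hm.
have [eta eta0 He] := open_x oO Oab.
apply: (@int_max_second R (fun r => f r b ts - eps * rho r b)
   (fun r => px f r b ts - eps * dx rho r b) a _ eta eta0).
- move=> r ra; have Or := He r ra.
  have [d1 _] := Hf r b ts (conj Or (conj ts0 tsT)).
  apply: der_lin; first exact: deriv_of.
  exact: (deriv_of ((Hs [::]).1 r b).1).
- have [_ [_ [_ [d4 _]]]] := Hf a b ts (conj Oab (conj ts0 tsT)).
  apply: der_lin; first exact: deriv_of.
  exact: (deriv_of ((Hs [:: true]).1 a b).1).
- move=> r ra; exact: Hm (He r ra).
Qed.

Lemma int_y (Omega : set (R * R)) rho f (T : \bar R) (eps a b ts : R) :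
  smooth2 rho -> C21 Omega T f -> open Omega -> Omega (a, b) -> 0 < ts ->
  (ts%:E < T)%E ->
  (forall r, Omega (a, r) -> f a r ts - eps * rho a r <= f a b ts - eps * rho a b) ->
  py (py f) a b ts - eps * dy (dy rho) a b <= 0.
Proof.
move=> Hs [Hf _] oO Oab ts0 tsT Hm.
have [eta eta0 He] := open_y oO Oab.
apply: (@int_max_second R (fun r => f a r ts - eps * rho a r)
   (fun r => py f a r ts - eps * dy rho a r) b _ eta eta0).
- move=> r ra; have Or := He r ra.
  have [_ [d2 _]] := Hf a r ts (conj Or (conj ts0 tsT)).
  apply: der_lin; first exact: deriv_of.
  exact: (deriv_of ((Hs [::]).1 a r).2).
- have [_ [_ [_ [_ [_ [_ d7]]]]]] := Hf a b ts (conj Oab (conj ts0 tsT)).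
  apply: der_lin; first exact: deriv_of.
  exact: (deriv_of ((Hs [:: false]).1 a b).2).
- move=> r ra; exact: Hm (He r ra).
Qed.

Lemma int_t (Omega : set (R * R)) f (T : \bar R) (c a b ts : R) :
  C21 Omega T f -> Omega (a, b) -> 0 < ts -> (ts%:E < T)%E ->
  (forall s, 0 < s -> s < ts -> f a b s - c * s <= f a b ts - c * ts) ->
  0 <= pt f a b ts - c.
Proof.
move=> [Hf _] Oab ts0 tsT Hm.
have [_ [_ [d3 _]]] := Hf a b ts (conj Oab (conj ts0 tsT)).
apply: (@left_max_deriv R (fun s => f a b s - c * s) ts _ ts) => //.
- have := der_lin c (deriv_of d3) (@is_derive_id _ _ ts 1).
  by rewrite mulr1.
- by move=> s s1 s2; apply: Hm => //; lra.
Qed.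


Lemma fst_cont (g : R * R -> R) : continuous g ->
  continuous (fun q : (R * R) * R => g q.1).
Proof. move=> Hg q. apply: continuous_comp; last exact: Hg. exact: cvg_fst. Qed.

Lemma within_subB (A : set ((R*R)*R)) (F G : (R*R)*R -> R) (e : R) :
  {within A, continuous F} -> continuous G ->
  {within A, continuous (fun q => F q - e * G q)}.
Proof.
move=> HF HG x.
have HG' : {within A, continuous (fun q => e * G q)}.
  apply: continuous_subspaceT => y. apply: continuousM. exact: cst_continuous. exact: HG.
exact: (@continuousB _ _ (subspace A) F (fun q => e * G q) x (HF x) (HG' x)).
Qed.

Lemma within_mulc (A : set ((R*R)*R)) (F : (R*R)*R -> R) (e : R) :
  {within A, continuous F} -> {within A, continuous (fun q => F q * e)}.
Proof.
move=> HF x.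
have Hc : {for x, continuous (fun _ : subspace A => e)} by exact: cst_continuous.
exact: (@continuousM _ (subspace A) F (fun _ => e) x (HF x) Hc).
Qed.

Lemma neg_near (A : set R) (P : R -> R) (a : R) : A a ->
  {within A, continuous P} -> P a < 0 ->
  exists2 eta : R, 0 < eta & forall r, `|r - a| < eta -> A r -> P r < 0.
Proof.
move=> Aa /withinP HP Pa.
have e0 : 0 < - P a by rewrite oppr_gt0.
have [d d0 Hd] := HP a Aa _ e0.
exists d => // r ra Ar.
have := Hd r Ar; rewrite distrC => /(_ ra).
rewrite ltr_norml => /andP [H1 H2]; lra.
Qed.


Lemma bdry_contra (Omega : set (R * R)) rho f (T : \bar R) (eps a b ts : R) :
  defining_function Omega rho -> C21 Omega T f ->
  {within Qcl0 Omega T, continuous (uncurry3 f)} -> neumann Omega T f ->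
  0 < eps -> closure Omega (a, b) -> ~ Omega (a, b) -> 0 < ts -> (ts%:E < T)%E ->
  (forall x y, closure Omega (x, y) ->
     f x y ts - eps * rho x y <= f a b ts - eps * rho a b) -> False.
Proof.
move=> Hd HC21 Hfc Hn eps0 cab nab ts0 tsT Hm.
have Hd' := Hd; case: Hd' => [Hs [HO Hgrad]].
have r0 : rho a b = 0 := rho_bdry Hd cab nab.
case: HC21 => [Hder [_ [[G1 HG1] [[G2 HG2] _]]]].
have Hne := Hn rho G1 G2 Hd HG1 HG2 a b ts r0 ts0 tsT.
set gx := dx rho a b in Hne; set gy := dy rho a b in Hne.
have sq : forall g : R, g != 0 -> 0 < g * g.
  by move=> g; case: (ltgtP g 0) => [gn|gp|->]; rewrite ?eqxx //; nra.
have sq' : forall g : R, 0 <= g * g.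
  by move=> g; case: (ltgtP g 0) => [gn|gp|->]; nra.
have gpos : 0 < gx * gx + gy * gy.
  case: (Hgrad (a, b) r0) => /= g0.
    by have := sq _ g0; have := sq' gy; rewrite /gx; lra.
  by have := sq _ g0; have := sq' gx; rewrite /gy; lra.
have Hsum : (G1 a b ts - eps * gx) * gx + (G2 a b ts - eps * gy) * gy < 0.
  have -> : (G1 a b ts - eps * gx) * gx + (G2 a b ts - eps * gy) * gy =
    (G1 a b ts * gx + G2 a b ts * gy) - eps * (gx * gx + gy * gy) by ring.
  rewrite Hne sub0r oppr_lt0; exact: mulr_gt0.
have HrC : continuous (fun q : (R * R) * R => rho q.1.1 q.1.2) := fst_cont (rho_cont Hs).
have Hpsi_c := within_subB (e:=eps) Hfc HrC.
have HdxC : continuous (fun q : (R * R) * R => dx rho q.1.1 q.1.2) := fst_cont (Hs [:: true]).2.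
have HdyC : continuous (fun q : (R * R) * R => dy rho q.1.1 q.1.2) := fst_cont (Hs [:: false]).2.
case: (ltP ((G1 a b ts - eps * gx) * gx) 0) => Hx.
- have : exists r, [set r | closure Omega (r, b)] r /\ (fun r => f r b ts - eps * rho r b) a < (fun r => f r b ts - eps * rho r b) r.
    apply: (@bdry_core R (fun r => f r b ts - eps * rho r b) (fun r => rho r b)
      (fun r => G1 r b ts - eps * dx rho r b) a gx [set r | closure Omega (r, b)] r0
      (deriv_of ((Hs [::]).1 a b).1) _ cab).
  6: by move=> [r [Cr Hr]]; have := Hm r b Cr; rewrite /= in Hr; lra.
  + by apply/eqP => g0; move: Hx; rewrite g0 mulr0 ltxx.
  + by move=> r rn; apply: subset_closure; apply/(HO (r, b)).
  + move=> r rn; have Or : Omega (r, b) by apply/(HO (r, b)).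
    have Q : Qint Omega T ((r, b), ts) by split.
    have := HG1.2 _ Q; rewrite /uncurry3 /= => ->.
    have [d1 _] := Hder r b ts Q.
    apply: der_lin; [exact: deriv_of d1 | exact: (deriv_of ((Hs [::]).1 r b).1)].
  + have Hw := within_comp (A := [set r | closure Omega (r, b)]) (@line_x_cont R b ts) _ Hpsi_c.
    apply: Hw. by move=> r Cr; split => //; split => //; exact: ltW.
  + apply: (@neg_near _ (fun r => (G1 r b ts - eps * dx rho r b) * gx)) => //.
    have Hw := within_comp (A := [set r | closure Omega (r, b)]) (@line_x_cont R b ts) _ (within_mulc (e:=gx) (within_subB (e:=eps) HG1.1 HdxC)).
    apply: Hw. by move=> r Cr; split.
- have Hy : (G2 a b ts - eps * gy) * gy < 0 by lra.
  have : exists r, [set r | closure Omega (a, r)] r /\ (fun r => f a r ts - eps * rho a r) b < (fun r => f a r ts - eps * rho a r) r.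
    apply: (@bdry_core R (fun r => f a r ts - eps * rho a r) (fun r => rho a r)
      (fun r => G2 a r ts - eps * dy rho a r) b gy [set r | closure Omega (a, r)] r0
      (deriv_of ((Hs [::]).1 a b).2) _ cab).
  6: by move=> [r [Cr Hr]]; have := Hm a r Cr; rewrite /= in Hr; lra.
  + by apply/eqP => g0; move: Hy; rewrite g0 mulr0 ltxx.
  + by move=> r rn; apply: subset_closure; apply/(HO (a, r)).
  + move=> r rn; have Or : Omega (a, r) by apply/(HO (a, r)).
    have Q : Qint Omega T ((a, r), ts) by split.
    have := HG2.2 _ Q; rewrite /uncurry3 /= => ->.
    have [_ [d2 _]] := Hder a r ts Q.
    apply: der_lin; [exact: deriv_of d2 | exact: (deriv_of ((Hs [::]).1 a r).2)].
  + have Hw := within_comp (A := [set r | closure Omega (a, r)]) (@line_y_cont R a ts) _ Hpsi_c.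
    apply: Hw. by move=> r Cr; split => //; split => //; exact: ltW.
  + apply: (@neg_near _ (fun r => (G2 a r ts - eps * dy rho a r) * gy)) => //.
    have Hw := within_comp (A := [set r | closure Omega (a, r)]) (@line_y_cont R a ts) _ (within_mulc (e:=gy) (within_subB (e:=eps) HG2.1 HdyC)).
    apply: Hw. by move=> r Cr; split.
Qed.


Lemma max_princ (Omega : set (R * R)) (T : \bar R) (f : R -> R -> R -> R) (d lam mu : R) :
  smooth_bounded_domain Omega -> 0 < d -> 0 < lam -> 0 < mu -> (0 < T)%E ->
  C21 Omega T f -> {within Qcl0 Omega T, continuous (uncurry3 f)} -> neumann Omega T f ->
  (forall x y t, Qint Omega T ((x, y), t) ->
     pt f x y t <= d * lap f x y t + f x y t * (lam - mu * f x y t)) ->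
  exists M : R, 0 < M /\ forall x y t, Qint Omega T ((x, y), t) -> f x y t <= M.
Proof.
move=> [[p0 Op0] [oO [_ [bO [rho Hd]]]]] d0 l0 m0 T0 HC21 Hfc Hn Hpde.
have Hs := Hd.1.
have cK := closure_compact bO.
have ne : closure Omega !=set0 by exists p0; exact: subset_closure.
have [R0 [R00 HR0]] := cont_bound ne cK (continuous_subspaceT (rho_cont Hs)).
have Hlap : continuous (fun p : R * R => dx (dx rho) p.1 p.2 + dy (dy rho) p.1 p.2).
  move=> p; exact: (@continuousD _ _ _ (fun p : R * R => dx (dx rho) p.1 p.2)
    (fun p : R * R => dy (dy rho) p.1 p.2) p ((Hs [:: true; true]).2 p) ((Hs [:: false; false]).2 p)).
have [L [L0 HL]] := cont_bound ne cK (continuous_subspaceT Hlap).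
set K0 := closure Omega `*` [set (0 : R)].
have cK0 : compact K0 by apply: compact_setX => //; exact: compact_set1.
have neK0 : K0 !=set0 by exists (p0, 0); split => //; exact: subset_closure.
have subK0 : K0 `<=` Qcl0 Omega T by move=> [p s] [cp /= ->]; split => //.
have [B0 [B00 HB0]] := cont_bound neK0 cK0 (continuous_subspaceW subK0 Hfc).
exists (Num.max B0 (lam / mu)); split.
  by rewrite lt_max divr_gt0 // orbT.
set M := Num.max B0 (lam / mu).
have MB0 : B0 <= M by rewrite le_max lexx.
have Mlm : lam / mu <= M by rewrite le_max lexx orbT.
move=> x0 y0 t0 [Ox0 [t00 t0T]].
rewrite leNgt; apply/negP => Hgt.
set f0 := f x0 y0 t0 in Hgt.
set del := f0 - M.
have del0 : 0 < del by rewrite /del; lra.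
set K := d * L + 1.
have K0p : 0 < K.
  have HH : 0 <= d * L by apply: mulr_ge0 => //; exact: ltW.
  rewrite /K; lra.
set X := 2 * R0 + 1 + K * t0.
have X0 : 0 < X.
  have HH : 0 <= K * t0 by apply: mulr_ge0; exact: ltW.
  rewrite /X; lra.
set eps := del / (2 * X).
have eps0 : 0 < eps by rewrite /eps divr_gt0 // mulr_gt0.
have key : eps * R0 * 2 + eps + eps * K * t0 = del / 2.
  have Xn : X != 0 by apply: lt0r_neq0.
  rewrite /eps; move: Xn; rewrite /X => Xn; by field.
set K1 := closure Omega `*` [set` `[0, t0]].
have cK1 : compact K1 by apply: compact_setX => //; exact: segment_compact.
have neK1 : K1 !=set0.
  by exists (p0, 0); split; [exact: subset_closure | rewrite /= in_itv /= lexx ltW].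
have subK1 : K1 `<=` Qcl0 Omega T.
  move=> [p s] [cp /=]; rewrite in_itv /= => /andP [s0 st]; split => //; split => //.
  by apply: le_lt_trans t0T; rewrite lee_fin.
have hcont : {within K1, continuous (fun q => (uncurry3 f q - eps * rho q.1.1 q.1.2) - (eps * K) * q.2)}.
  apply: within_subB; first exact: (within_subB (continuous_subspaceW subK1 Hfc) (fst_cont (rho_cont Hs))).
  by move=> q; exact: cvg_snd.
have [[[a b] ts] Kq Hmax] := compact_EVT_max neK1 cK1 hcont.
have HK : forall x y s, closure Omega (x, y) -> 0 <= s -> s <= t0 ->
    f x y s - eps * rho x y - eps * K * s <= f a b ts - eps * rho a b - eps * K * ts.
  move=> x y s cxy s0 st; apply: (Hmax ((x, y), s)); apply: mem_set.
  by split => //; rewrite /= in_itv /= s0 st.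
have [cab [ts0' tst0]] : closure Omega (a, b) /\ 0 <= ts /\ ts <= t0.
  by move: Kq; rewrite inE => -[cab /=]; rewrite in_itv /= => /andP [? ?].
have hx0 : f0 - eps * rho x0 y0 - eps * K * t0 <= f a b ts - eps * rho a b - eps * K * ts.
  by apply: HK => //; [exact: subset_closure | exact: ltW].
have r1 : eps * rho x0 y0 <= eps * R0.
  rewrite ler_pM2l //; have := HR0 (x0, y0) (subset_closure Ox0).
  by rewrite ler_norml => /andP [_ ->].
have r2 : - (eps * R0) <= eps * rho a b.
  rewrite -mulrN ler_pM2l //; have := HR0 (a, b) cab.
  by rewrite ler_norml => /andP [-> _].
have tsK : 0 <= eps * K * ts by rewrite mulr_ge0 // mulr_ge0 // ltW.
have Fbig : M + del / 2 < f a b ts.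
  rewrite /del; move: key; rewrite /del => key; lra.
have ts0 : 0 < ts.
  rewrite lt_neqAle ts0' andbT; apply/eqP => E.
  have := HB0 ((a, b), 0) (conj cab erefl); rewrite /uncurry3 /= => HB.
  have HB' : f a b 0 <= M.
    by apply: le_trans MB0; apply: le_trans HB; exact: ler_norm.
  move: Fbig; rewrite -E; lra.
have tsT : (ts%:E < T)%E.
  by apply: le_lt_trans t0T; rewrite lee_fin.
have Fpos : 0 < f a b ts.
  have : 0 < M by rewrite lt_max divr_gt0 // orbT.
  lra.
have Hslice : forall x y, closure Omega (x, y) ->
    f x y ts - eps * rho x y <= f a b ts - eps * rho a b.
  move=> x y cxy; have := HK x y ts cxy ts0' tst0; lra.
case: (pselect (Omega (a, b))) => Oab; last first.
  exact: (bdry_contra Hd HC21 Hfc Hn eps0 cab Oab ts0 tsT Hslice).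
have Hxx : px (px f) a b ts - eps * dx (dx rho) a b <= 0.
  apply: (int_x Hs HC21 oO Oab ts0 tsT) => r Or.
  exact: Hslice (subset_closure Or).
have Hyy : py (py f) a b ts - eps * dy (dy rho) a b <= 0.
  apply: (int_y Hs HC21 oO Oab ts0 tsT) => r Or.
  exact: Hslice (subset_closure Or).
have Ht : 0 <= pt f a b ts - eps * K.
  apply: (int_t (c := eps * K) HC21 Oab ts0 tsT) => s s0 sts.
  have st : s <= t0 by lra.
  have := HK a b s cab (ltW s0) st; lra.
have Hp : pt f a b ts <= d * (px (px f) a b ts + py (py f) a b ts) +
    f a b ts * (lam - mu * f a b ts).
  exact: (Hpde a b ts (conj Oab (conj ts0 tsT))).
have HLa : dx (dx rho) a b + dy (dy rho) a b <= L.
  by have := HL (a, b) cab; rewrite /= ler_norml => /andP [_ ->].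
have h1 : d * (px (px f) a b ts + py (py f) a b ts) <= d * (eps * L).
  rewrite ler_pM2l //.
  have : eps * (dx (dx rho) a b + dy (dy rho) a b) <= eps * L by rewrite ler_pM2l.
  rewrite mulrDr; lra.
have e1 : mu * (lam / mu) = lam by rewrite mulrC divfK // gt_eqF.
have h3 : 0 < mu * (f a b ts - lam / mu).
  by apply: mulr_gt0 => //; lra.
rewrite mulrBr e1 in h3.
have h2 : f a b ts * (lam - mu * f a b ts) <= 0.
  by rewrite mulr_ge0_le0 //; [exact: ltW | lra].
have e2 : eps * K = d * (eps * L) + eps by rewrite /K; ring.
lra.
Qed.



End S2.
Unset Implicit Arguments.
Set Strict Implicit.

Theorem lemma3p1 (R : realType) (Omega : set (R * R))
  (d1 d2 d3 chi l1 l2 l3 m1 m2 m3 a1 a2 a3 b1 b2 b3 : R)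
  (u0 v0 w0 : R -> R -> R) (T : \bar R) (u v w : R -> R -> R -> R) :
  smooth_bounded_domain Omega ->
  0 < d1 -> 0 < d2 -> 0 < d3 -> 0 < chi ->
  0 < l1 -> 0 < l2 -> 0 < l3 -> 0 < m1 -> 0 < m2 -> 0 < m3 ->
  0 < a1 -> 0 < a2 -> 0 < a3 -> 0 < b1 -> 0 < b2 -> 0 < b3 ->
  (forall p : R * R, closure Omega p ->
     0 <= u0 p.1 p.2 /\ 0 <= v0 p.1 p.2 /\ 0 <= w0 p.1 p.2) ->
  (exists theta : R, 2 < theta /\ W1 Omega theta u0 /\ W1 Omega theta v0) ->
  {within closure Omega, continuous (uncurry2 w0)} ->
  (0 < T)%E ->
  is_maximal_solution Omega d1 d2 d3 chi l1 l2 l3 m1 m2 m3 a1 a2 a3 b1 b2 b3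
    u0 v0 w0 T u v w ->
  (forall x y t, Qcl0 Omega T ((x, y), t) ->
     0 <= u x y t /\ 0 <= v x y t /\ 0 <= w x y t) ->
  exists C : R, 0 < C /\
    forall x y t, Qint Omega T ((x, y), t) ->
      `|u x y t| <= C /\ `|v x y t| <= C.
Proof.
move=> HO d10 d20 _ _ l10 l20 _ m10 m20 _ a10 a20 a30 b10 _ _ _ _ _ T0 [Hsol _] Hnn.
case: Hsol => [Cu [Cv [_ [cu [cv [_ [_ [Heq [Nu [Nv _]]]]]]]]]].
have Hnn' : forall x y t, Qint Omega T ((x, y), t) ->
    0 <= u x y t /\ 0 <= v x y t /\ 0 <= w x y t.
  move=> x y t [Oxy [t0 tT]]; apply: Hnn; split; first exact: subset_closure.
  by split => //; exact: ltW.
have [Mu [Mu0 HMu]] : exists M : R, 0 < M /\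
    forall x y t, Qint Omega T ((x, y), t) -> u x y t <= M.
  apply: (max_princ (d := d1) (lam := l1) (mu := m1) HO d10 l10 m10 T0 Cu cu Nu).
  move=> x y t Q; have [Hu _] := Heq x y t Q.
  have [nu [nv nw]] := Hnn' x y t Q.
  have Hp : 0 <= u x y t * (a1 * v x y t + a2 * w x y t).
    by apply: mulr_ge0 => //; apply: addr_ge0; apply: mulr_ge0 => //; exact: ltW.
  have E : u x y t * (l1 - m1 * u x y t - a1 * v x y t - a2 * w x y t) =
    u x y t * (l1 - m1 * u x y t) - u x y t * (a1 * v x y t + a2 * w x y t) by ring.
  rewrite Hu E; lra.
have lam2 : 0 < l2 + b1 * Mu by apply: addr_gt0 => //; exact: mulr_gt0.
have [Mv [Mv0 HMv]] : exists M : R, 0 < M /\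
    forall x y t, Qint Omega T ((x, y), t) -> v x y t <= M.
  apply: (max_princ (d := d2) (lam := l2 + b1 * Mu) (mu := m2) HO d20 lam2 m20 T0 Cv cv Nv).
  move=> x y t Q; have [_ [Hv _]] := Heq x y t Q.
  have [nu [nv nw]] := Hnn' x y t Q.
  have Hmu := HMu x y t Q.
  have Hp : 0 <= v x y t * (b1 * (Mu - u x y t) + a3 * w x y t).
    apply: mulr_ge0 => //; apply: addr_ge0; apply: mulr_ge0 => //; try exact: ltW.
    by rewrite subr_ge0.
  have E : v x y t * (l2 - m2 * v x y t + b1 * u x y t - a3 * w x y t) =
    v x y t * (l2 + b1 * Mu - m2 * v x y t) - v x y t * (b1 * (Mu - u x y t) + a3 * w x y t) by ring.
  rewrite Hv E; lra.
exists (Num.max Mu Mv); split; first by rewrite lt_max Mu0.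
move=> x y t Q; have [nu [nv _]] := Hnn' x y t Q.
rewrite !ger0_norm //; split.
  by apply: le_trans (HMu x y t Q) _; rewrite le_max lexx.
by apply: le_trans (HMv x y t Q) _; rewrite le_max lexx orbT.
Qed.
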